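(* Let $2\le n\le l$ be integers, let $L_l=\{a_1<\dots<a_l\}$ be the linearly ordered semilattice of $l$ elements, and let $t(X)=s(X)$ be an equation over $L_l$ in the variables $X=\{x_1,\dots,x_n\}$ in which every variable occurs, with $|\mathrm{Var}(t)\setminus\mathrm{Var}(s)|=k_1$ and $|\mathrm{Var}(s)\setminus\mathrm{Var}(t)|=k_2$. Then the number of irreducible components of the solution set $V(t(X)=s(X))\subseteq L_l^n$ equals $(n-k_1-k_2)(n-1)!+k_1k_2(n-2)!$.
   Context: $L_l$ has multiplication $a_ia_j=a_{\min(i,j)}$. A term is a commutative word in $x_1,\dots,x_n$; $\mathrm{Var}(t)$ is the set of variables occurring in $t$. An equation is an ordered pair of terms $t(X)=s(X)$; $P\in L_l^n$ is a solution if $t(P)=s(P)$. For a system $S$ of equations, $V(S)$ is its set of common solutions; $Y\subseteq L_l^n$ is algebraic if $Y=V(S)$ for some system $S$; an algebraic set is irreducible if it is not a proper finite union of other algebraic sets. Every algebraic set is uniquely (up to order) a finite union $Y_1\cup\dots\cup Y_m$ of irreducible algebraic sets with $Y_i\not\subseteq Y_j$ for $i\ne j$; these $Y_i$ are its irreducible components. *)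

(* Defs.v *)
From mathcomp Require Import all_boot.
Set Implicit Arguments. Unset Strict Implicit. Unset Printing Implicit Defensive.

(* Elements a_1 < ... < a_l of L_l are represented by the ordinals 0 < ... < l-1
   of 'I_l; the product a_i a_j = a_{min(i,j)} becomes minn on the underlying nat. *)

Definition point (n l : nat) := {ffun 'I_n -> 'I_l}.

(* A term is a (commutative) word in x_1..x_n, i.e. a finite nonempty sequence
   of variable indices; nonemptiness is imposed where terms are used. *)
Definition term (n : nat) := seq 'I_n.

(* Value of a term at a point: the product (= minimum) of the values of its letters.
   (The default l is never reached for nonempty words.) *)
Definition eval_term (n l : nat) (t : term n) (P : point n l) : nat :=
  foldr (fun i m => minn (nat_of_ord (P i)) m) l t.

Definition Var (n : nat) (t : term n) : {set 'I_n} := [set i | i \in t].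

Definition equation (n : nat) := (term n * term n)%type.

Definition is_solution (n l : nat) (e : equation n) (P : point n l) : Prop :=
  eval_term e.1 P = eval_term e.2 P.

Definition algebraic (n l : nat) (Y : {set point n l}) : Prop :=
  exists S : equation n -> Prop,
    (forall e, S e -> e.1 != [::] /\ e.2 != [::]) /\
    (forall P : point n l, P \in Y <-> (forall e, S e -> is_solution e P)).

Definition irreducible (n l : nat) (Y : {set point n l}) : Prop :=
  algebraic Y /\
  ~ (exists s : seq {set point n l},
       (forall Z, Z \in s -> algebraic Z /\ Z \proper Y) /\
       Y = \bigcup_(Z <- s) Z).

Definition irreducible_decomposition (n l : nat) (Y : {set point n l})
    (s : seq {set point n l}) : Prop :=
  (forall Z, Z \in s -> irreducible Z) /\
  (forall i j, i < size s -> j < size s -> i != j ->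
      ~~ (nth set0 s i \subset nth set0 s j)) /\
  Y = \bigcup_(Z <- s) Z.

Definition V1 (n l : nat) (e : equation n) : {set point n l} :=
  [set P : point n l | eval_term e.1 P == eval_term e.2 P].

(* Main.v *)
Require Import Defs.
From mathcomp Require Import all_boot.
From mathcomp Require Import fingroup perm zify.
Set Implicit Arguments. Unset Strict Implicit. Unset Printing Implicit Defensive.

Lemma in_bigcup_seq (T : finType) (s : seq {set T}) x :
  (x \in (\bigcup_(Z <- s) Z : {set T})) = has (fun Z : {set T} => x \in Z) s.
Proof. elim: s => [|Z s IH]; first by rewrite big_nil inE. by rewrite big_cons inE IH. Qed.

Lemma eval_le n l (t : term n) (P : point n l) x : x \in t -> eval_term t P <= P x.
Proof.
elim: t => [|y t IH] //=; rewrite inE => /orP [/eqP <-|/IH h]; first exact: geq_minl.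
exact: leq_trans (geq_minr _ _) h.
Qed.

Lemma eval_ge n l (t : term n) (Q : point n l) m :
  m <= l -> (forall z, z \in t -> m <= Q z) -> m <= eval_term t Q.
Proof.
move=> ml; elim: t => [|y t IH] //= H.
rewrite leq_min H ?inE ?eqxx //= IH // => z zt; apply: H; by rewrite inE zt orbT.
Qed.

Lemma eval_mem n l (t : term n) (P : point n l) :
  t != [::] -> exists2 x, x \in t & eval_term t P = P x.
Proof.
elim: t => [|y t IH] // _ /=.
case: t IH => [|z t] IH.
  by exists y; rewrite ?inE ?eqxx //=; apply/minn_idPl; apply: ltnW.
have [x xt ->] := IH isT.
case: (leqP (P y) (P x)) => h.
  by exists y; rewrite ?inE ?eqxx.
exists x; first by rewrite inE xt orbT.
by [].
Qed.

Lemma eval_eqQ n l (t : term n) (Q : point n l) x :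
  x \in t -> (forall z, z \in t -> Q x <= Q z) -> eval_term t Q = Q x.
Proof.
move=> xt H; apply/eqP; rewrite eqn_leq eval_le //= eval_ge //; exact: ltnW.
Qed.

Definition Comp n l (P : point n l) : {set point n l} :=
  [set Q : point n l | [forall x, forall y, (P x <= P y) ==> (Q x <= Q y)]].

Lemma inComp n l (P Q : point n l) :
  Q \in Comp P <-> (forall x y, P x <= P y -> Q x <= Q y).
Proof.
rewrite inE; split.
  by move=> /forallP H x y; move: (H x) => /forallP /(_ y) /implyP.
by move=> H; apply/forallP => x; apply/forallP => y; apply/implyP; apply: H.
Qed.

Lemma Comp_self n l (P : point n l) : P \in Comp P.
Proof. by apply/inComp. Qed.

Lemma transfer n l (P Q : point n l) (t s : term n) :
  t != [::] -> s != [::] -> eval_term t P = eval_term s P -> Q \in Comp P ->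
  eval_term t Q = eval_term s Q.
Proof.
move=> tn sn Hts /inComp HQ.
have [x xt ex] := eval_mem P tn; have [y ys ey] := eval_mem P sn.
rewrite (@eval_eqQ _ _ t Q x) ?(@eval_eqQ _ _ s Q y) //.
- by apply/eqP; rewrite eqn_leq !HQ // -ex -ey Hts.
- by move=> z zs; apply: HQ; rewrite -ey eval_le.
- by move=> z zt; apply: HQ; rewrite -ex eval_le.
Qed.

Lemma Comp_alg n l (P : point n l) : algebraic (Comp P).
Proof.
exists (fun e => exists x y, P x <= P y /\ e = ([:: x], [:: x; y])); split.
  by move=> e [x [y [_ ->]]].
move=> Q; rewrite inComp; split.
  move=> H e [x [y [Hxy ->]]]; rewrite /is_solution /eval_term /=.
  rewrite !(minn_idPl (ltnW (ltn_ord _))); apply/esym/minn_idPl; exact: H.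
move=> H x y Hxy; have := H _ (ex_intro _ x (ex_intro _ y (conj Hxy erefl))).
rewrite /is_solution /eval_term /= !(minn_idPl (ltnW (ltn_ord _))) => e.
by apply/minn_idPl; rewrite -e.
Qed.

Lemma Comp_irr n l (P : point n l) : irreducible (Comp P).
Proof.
split; first exact: Comp_alg.
move=> [s [Hs Heq]].
have := Comp_self P; rewrite {1}Heq in_bigcup_seq => /hasP [Z Zs PZ].
have [[S [SN SP]] Hpr] := Hs Z Zs.
move: Hpr; rewrite properE => /andP [_ /negP]; apply.
apply/subsetP => Q HQ; apply/SP => e Se.
have [e1 e2] := SN e Se.
by apply: (transfer e1 e2 _ HQ); apply: (proj1 (SP P) PZ).
Qed.

Lemma alg_cap n l (Y Z : {set point n l}) :
  algebraic Y -> algebraic Z -> algebraic (Y :&: Z).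
Proof.
move=> [S1 [N1 P1]] [S2 [N2 P2]].
exists (fun e => S1 e \/ S2 e); split; first by move=> e [/N1|/N2].
move=> P; rewrite inE; split.
  by move=> /andP [/P1 h1 /P2 h2] e [/h1|/h2].
move=> H; apply/andP; split; [apply/P1|apply/P2] => e he; apply: H; by [left|right].
Qed.

Lemma nr_mem n l (d : seq {set point n l}) :
  (forall i j, i < size d -> j < size d -> i != j ->
      ~~ (nth set0 d i \subset nth set0 d j)) ->
  forall Z Z', Z \in d -> Z' \in d -> Z \subset Z' -> Z = Z'.
Proof.
move=> H Z Z' /(nthP set0) [i ni <-] /(nthP set0) [j nj <-] sub.
case: (eqVneq i j) => [->//|ij]; by move: (H i j ni nj ij); rewrite sub.
Qed.

Lemma nr_uniq n l (d : seq {set point n l}) :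
  (forall i j, i < size d -> j < size d -> i != j ->
      ~~ (nth set0 d i \subset nth set0 d j)) -> uniq d.
Proof.
move=> H; apply/(uniqP set0) => i j ni nj e.
case: (eqVneq i j) => [//|ij]; by move: (H i j ni nj ij); rewrite e subxx.
Qed.

Lemma cover n l (Y : {set point n l}) d1 d2 :
  irreducible_decomposition Y d1 -> irreducible_decomposition Y d2 ->
  forall Z, Z \in d1 -> exists2 W, W \in d2 & Z \subset W.
Proof.
move=> [I1 [N1 E1]] [I2 [N2 E2]] Z Zd.
case: (boolP (has (fun W : {set point n l} => Z \subset W) d2)) => [/hasP [W Wd ZW]|hn].
  by exists W.
exfalso; have [_ Hn] := I1 Z Zd; apply: Hn.
exists [seq Z :&: W | W <- d2]; split.
  move=> U /mapP [W Wd ->]; split.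
    apply: alg_cap; [exact: (proj1 (I1 Z Zd))| exact: (proj1 (I2 W Wd))].
  rewrite properE subsetIl /= subsetI subxx /=.
  by apply: contra hn => ZW; apply/hasP; exists W.
apply/setP => Q; rewrite in_bigcup_seq has_map.
apply/idP/idP.
  move=> QZ; have : Q \in Y by rewrite E1 in_bigcup_seq; apply/hasP; exists Z.
  rewrite E2 in_bigcup_seq => /hasP [W Wd QW]; apply/hasP; exists W => //=.
  by rewrite inE QZ.
by move=> /hasP [W _]; rewrite /= inE => /andP [].
Qed.

Lemma decomp_size n l (Y : {set point n l}) d1 d2 :
  irreducible_decomposition Y d1 -> irreducible_decomposition Y d2 ->
  size d1 = size d2.
Proof.
move=> D1 D2.
have key : forall d d', irreducible_decomposition Y d -> irreducible_decomposition Y d' ->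
   forall Z, Z \in d -> Z \in d'.
  move=> d d' D D' Z Zd.
  have [W Wd ZW] := cover D D' Zd.
  have [Z' Z'd WZ'] := cover D' D Wd.
  have EZ : Z = Z' := nr_mem (proj1 (proj2 D)) Zd Z'd (subset_trans ZW WZ').
  suff -> : Z = W by [].
  by apply/eqP; rewrite eqEsubset ZW EZ.
apply: perm_size; apply: uniq_perm.
- exact: nr_uniq (proj1 (proj2 D1)).
- exact: nr_uniq (proj1 (proj2 D2)).
by move=> Z; apply/idP/idP; apply: key.
Qed.

Lemma card_lt n v : v <= n -> #|[set i : 'I_n | i < v]| = v.
Proof.
move=> vn; rewrite -sum1_card.
rewrite (eq_bigl (fun i : 'I_n => i < v)); last by move=> i; rewrite inE.
rewrite -(big_ord_widen _ (fun _ => 1) vn).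
by rewrite sum_nat_const card_ord muln1.
Qed.

Definition hb (b : bool) (i : nat) : nat := if b && (i == 1) then 0 else i.

Lemma hb_le b i : hb b i <= i.
Proof. by rewrite /hb; case: ifP => // /andP [_ /eqP ->]. Qed.

Lemma gpt_proof n l (hnl : n <= l) b (s : {perm 'I_n}) x : hb b (s x) < l.
Proof. exact: leq_ltn_trans (hb_le _ _) (leq_trans (ltn_ord _) hnl). Qed.

Definition gpt n l (hnl : n <= l) b (s : {perm 'I_n}) : point n l :=
  [ffun x => Ordinal (gpt_proof hnl b s x)].

Lemma gptE n l (hnl : n <= l) b s x : (gpt hnl b s x : nat) = hb b (s x).
Proof. by rewrite ffunE. Qed.

Lemma card_hb n b (v : 'I_n) : #|[set i : 'I_n | hb b i < hb b v]| = hb b v.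
Proof.
case: b; last by rewrite /hb /= card_lt // ltnW.
rewrite /hb /=; case: (eqVneq (v : nat) 1) => [_|v1] /=.
  apply/eqP; rewrite cards_eq0; apply/eqP/setP => i; by rewrite !inE ltn0.
rewrite -[RHS](card_lt (ltnW (ltn_ord v))); apply: eq_card => i; rewrite !inE.
case: (eqVneq (i : nat) 1) => [->|i1] /=; lia.
Qed.

Lemma rankN n b (s : {perm 'I_n}) x :
  #|[set y | hb b (s y) < hb b (s x)]| = hb b (s x).
Proof.
rewrite -[RHS](card_hb b (s x)) -(card_imset _ (@perm_inj _ s)); apply: eq_card => i.
rewrite inE; apply/imsetP/idP.
  by case=> y; rewrite inE => Hy ->.
by move=> Hi; exists (s^-1 i)%g; rewrite ?inE permKV.
Qed.

Lemma sum_eq_le n (f g : 'I_n -> nat) :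
  (forall x, f x <= g x) -> \sum_x f x = \sum_x g x -> forall x, f x = g x.
Proof.
move=> le eq x.
have e : \sum_x g x = \sum_x f x + \sum_x (g x - f x).
  by rewrite -big_split; apply: eq_bigr => y _ /=; rewrite subnKC.
move: e; rewrite -eq -{1}(addn0 (\sum_x f x)) => /eqP; rewrite eqn_add2l eq_sym.
rewrite sum_nat_eq0 => /forallP /(_ x) /=; rewrite subn_eq0 => h.
by apply/eqP; rewrite eqn_leq le h.
Qed.

Lemma sumperm n (s : {perm 'I_n}) (F : 'I_n -> nat) : \sum_x F (s x) = \sum_x F x.
Proof. by rewrite [RHS](reindex_inj (@perm_inj _ s)). Qed.

Definition good n (A B C : {set 'I_n}) (b : bool) (s : {perm 'I_n}) : bool :=
  if b then [forall x, ((s x == 0 :> nat) ==> (x \in A)) && ((s x == 1 :> nat) ==> (x \in B))]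
  else [forall x, (s x == 0 :> nat) ==> (x \in C)].

Lemma goodF n (A B C : {set 'I_n}) s x : good A B C false s -> (s x : nat) = 0 -> x \in C.
Proof. by move=> /forallP /(_ x) /implyP H h; apply: H; rewrite h. Qed.
Lemma goodT0 n (A B C : {set 'I_n}) s x : good A B C true s -> (s x : nat) = 0 -> x \in A.
Proof. by move=> /forallP /(_ x) /andP [/implyP H _] h; apply: H; rewrite h. Qed.
Lemma goodT1 n (A B C : {set 'I_n}) s x : good A B C true s -> (s x : nat) = 1 -> x \in B.
Proof. by move=> /forallP /(_ x) /andP [_ /implyP H] h; apply: H; rewrite h. Qed.

Lemma K n l (hnl : n <= l) (A B C : {set 'I_n}) (i0 i1 : 'I_n) :
  (i0 : nat) = 0 -> (i1 : nat) = 1 ->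
  (forall x, x \in A -> x \in B -> False) ->
  (forall x, x \in A -> x \in C -> False) ->
  (forall x, x \in B -> x \in C -> False) ->
  forall b s b' s', good A B C b s -> good A B C b' s' ->
  (forall x y, gpt hnl b' s' x <= gpt hnl b' s' y -> gpt hnl b s x <= gpt hnl b s y) ->
  b = b' /\ s = s'.
Proof.
move=> e0 e1 dAB dAC dBC b s b' s' G G' H.
have H' : forall x y, hb b' (s' x) <= hb b' (s' y) -> hb b (s x) <= hb b (s y).
  by move=> x y; rewrite -!(gptE hnl); apply: H.
have le : forall x, hb b (s x) <= hb b' (s' x).
  move=> x; rewrite -(rankN b s x) -(rankN b' s' x); apply: subset_leq_card.
  apply/subsetP => y; rewrite !inE => h; rewrite ltnNge; apply/negP => h2.
  by move: (H' x y h2); rewrite leqNgt h.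
have x0E : (s' (s'^-1 i0)%g : nat) = 0 by rewrite permKV.
have x1E : (s' (s'^-1 i1)%g : nat) = 1 by rewrite permKV.
have hb0 : forall i, hb true i = 0 -> i = 0 \/ i = 1.
  by move=> i; rewrite /hb /=; case: eqP => [->|]; [right|left].
have bb : b = b'.
  case: b b' G G' H H' le => [] [] // G G' H H' le.
  - exfalso; set x0 := (s'^-1 i0)%g.
    have Cx : x0 \in C by apply: (goodF G').
    have := le x0; rewrite x0E /hb /= leqn0 => /eqP h.
    case: (hb0 _ h) => h'.
      by apply: (dAC x0) => //; apply: (goodT0 G).
    by apply: (dBC x0) => //; apply: (goodT1 G).
  - exfalso; set x0 := (s'^-1 i0)%g; set x1 := (s'^-1 i1)%g.
    have := le x0; have := le x1; rewrite x0E x1E /hb /= !leqn0 => /eqP h1 /eqP h0.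
    have : s x0 = s x1 by apply/val_inj => /=; rewrite h0 h1.
    move/perm_inj; rewrite /x0 /x1 => /(congr1 s'); rewrite !permKV => /(congr1 val).
    by rewrite /= e0 e1.
subst b'; split => //.
have eqf : forall x, hb b (s x) = hb b (s' x).
  apply: sum_eq_le => //.
  by rewrite (sumperm s (hb b)) (sumperm s' (hb b)).
apply/permP => x; apply/val_inj; move: (eqf x).
case: b G G' {H H' le eqf} => G G' /=; last by rewrite /hb.
rewrite /hb /=.
case: (eqVneq (s x : nat) 1) => h1; case: (eqVneq (s' x : nat) 1) => h1' //=.
- by rewrite h1 h1'.
- move=> h; exfalso; apply: (dAB x); [apply: (goodT0 G') | apply: (goodT1 G)]; by rewrite ?h1 -?h.
- move=> h; exfalso; apply: (dAB x); [apply: (goodT0 G) | apply: (goodT1 G')]; by rewrite ?h1' ?h.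
Qed.

Definition ltk n (k : 'I_n -> nat) (x y : 'I_n) : bool :=
  (k x < k y) || ((k x == k y) && (x < y)).

Definition rk n (k : 'I_n -> nat) (x : 'I_n) : nat := #|[set y | ltk k y x]|.

Lemma rk_lt n (k : 'I_n -> nat) x : rk k x < n.
Proof.
rewrite /rk; apply: (@leq_trans #|[set: 'I_n]|); last by rewrite cardsT card_ord.
apply: proper_card; rewrite properT.
apply/eqP => E; have : x \in [set y | ltk k y x] by rewrite E inE.
by rewrite inE /ltk ltnn eqxx ltnn.
Qed.

Lemma ltk_trans n (k : 'I_n -> nat) x y z : ltk k x y -> ltk k y z -> ltk k x z.
Proof. rewrite /ltk; lia. Qed.

Lemma rk_ltk n (k : 'I_n -> nat) x y : ltk k x y -> rk k x < rk k y.
Proof.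
move=> h; apply: proper_card; rewrite properE; apply/andP; split.
  by apply/subsetP => z; rewrite !inE => hz; apply: ltk_trans hz h.
apply/subsetP => /(_ x); rewrite !inE h /ltk ltnn eqxx ltnn => /(_ isT).
by [].
Qed.

Lemma rk_inj n (k : 'I_n -> nat) : injective (fun x => Ordinal (@rk_lt n k x)).
Proof.
move=> x y /(congr1 val) /= e.
case: (eqVneq x y) => // /negP nxy; exfalso; apply: nxy.
case: (boolP (ltk k x y)) => [/rk_ltk|h1]; first by rewrite e ltnn.
case: (boolP (ltk k y x)) => [/rk_ltk|h2]; first by rewrite e ltnn.
move: h1 h2; rewrite /ltk => h1 h2; apply/eqP/val_inj => /=; lia.
Qed.

Definition sperm n (k : 'I_n -> nat) : {perm 'I_n} := perm (@rk_inj n k).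

Lemma spermE n (k : 'I_n -> nat) x : (sperm k x : nat) = rk k x.
Proof. by rewrite /sperm permE. Qed.

Lemma sperm_mono n (k : 'I_n -> nat) x y : sperm k x <= sperm k y -> k x <= k y.
Proof.
rewrite !spermE => h; rewrite leqNgt; apply/negP => h2.
have : rk k y < rk k x by apply: rk_ltk; rewrite /ltk h2.
by rewrite ltnNge h.
Qed.

Lemma sperm0 n (k : 'I_n -> nat) x0 :
  (forall z, z != x0 -> k x0 < k z) -> (sperm k x0 : nat) = 0.
Proof.
move=> H; rewrite spermE /rk; apply/eqP; rewrite cards_eq0; apply/eqP/setP => y.
rewrite !inE /ltk; case: (eqVneq y x0) => [->|ne]; first by rewrite ltnn eqxx ltnn.
have := H y ne; lia.
Qed.

Lemma sperm1 n (k : 'I_n -> nat) x0 x1 :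
  x0 != x1 -> k x0 < k x1 -> (forall z, z != x0 -> z != x1 -> k x1 < k z) ->
  (sperm k x1 : nat) = 1.
Proof.
move=> n01 k01 H; rewrite spermE /rk -(cards1 x0); apply: eq_card => y.
rewrite !inE /ltk; case: (eqVneq y x0) => [->|ne0]; first by rewrite k01.
case: (eqVneq y x1) => [->|ne1]; first by rewrite ltnn eqxx ltnn.
have := H y ne0 ne1; lia.
Qed.

Lemma caseC n l (hnl : n <= l) (A B C : {set 'I_n}) (Q : point n l) c0 :
  c0 \in C -> (forall z, Q c0 <= Q z) ->
  exists s, good A B C false s /\ Q \in Comp (gpt hnl false s).
Proof.
move=> c0C Hm.
pose k := fun x : 'I_n => (Q x : nat) * 3 + (x != c0).
have s0 : (sperm k c0 : nat) = 0.
  apply: sperm0 => z nz; rewrite /k nz eqxx /=; have := Hm z; lia.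
exists (sperm k); split.
  apply/forallP => x; apply/implyP => /eqP h.
  have : sperm k x = sperm k c0 by apply/val_inj => /=; rewrite h s0.
  by move/perm_inj => ->.
apply/inComp => x y; rewrite !gptE /hb /= => /sperm_mono; rewrite /k.
have := leq_b1 (x != c0); have := leq_b1 (y != c0); lia.
Qed.

Lemma caseAB n l (hnl : n <= l) (A B C : {set 'I_n}) (Q : point n l) a0 b0 :
  a0 \in A -> b0 \in B -> a0 != b0 -> (forall z, Q a0 <= Q z) -> (Q b0 : nat) = Q a0 ->
  exists s, good A B C true s /\ Q \in Comp (gpt hnl true s).
Proof.
move=> aA bB nab Hm eb.
pose p := fun x : 'I_n => if x == a0 then 0 else if x == b0 then 1 else 2.
pose k := fun x : 'I_n => (Q x : nat) * 3 + p x.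
have pa : p a0 = 0 by rewrite /p eqxx.
have pb : p b0 = 1 by rewrite /p eq_sym (negbTE nab) eqxx.
have pz : forall z, z != a0 -> z != b0 -> p z = 2 by move=> z h1 h2; rewrite /p (negbTE h1) (negbTE h2).
have s0 : (sperm k a0 : nat) = 0.
  apply: sperm0 => z nz; rewrite /k pa.
  case: (eqVneq z b0) => [->|nzb]; first by rewrite pb eb; lia.
  by rewrite pz //; have := Hm z; lia.
have s1 : (sperm k b0 : nat) = 1.
  apply: (@sperm1 n k a0 b0) => //; first by rewrite /k pa pb eb; lia.
  by move=> z h1 h2; rewrite /k pb pz //; have := Hm z; lia.
have E0 : forall x, (sperm k x : nat) = 0 -> x = a0.
  move=> x h; have : sperm k x = sperm k a0 by apply/val_inj => /=; rewrite h s0.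
  by move/perm_inj.
have E1 : forall x, (sperm k x : nat) = 1 -> x = b0.
  move=> x h; have : sperm k x = sperm k b0 by apply/val_inj => /=; rewrite h s1.
  by move/perm_inj.
exists (sperm k); split.
  apply/forallP => x; apply/andP; split; apply/implyP => /eqP h.
    by rewrite (E0 x h).
  by rewrite (E1 x h).
apply/inComp => x y; rewrite !gptE /hb /=.
case: (leqP (sperm k x) (sperm k y)) => hxy.
  move=> _; move: (sperm_mono hxy); rewrite /k.
  have : p x <= 2 by rewrite /p; case: ifP => //; case: ifP.
  have : p y <= 2 by rewrite /p; case: ifP => //; case: ifP.
  lia.
case: (eqVneq (sperm k y : nat) 0) => [hy|hy].
  rewrite hy /=; case: eqP => hx; last by move=> h; exfalso; lia.
  by move=> _; rewrite (E1 x hx) (E0 y hy) eb.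
case: (eqVneq (sperm k y : nat) 1) => [hy1|hy1] /=.
  by case: eqP => hx; lia.
by case: eqP => hx; lia.
Qed.

Lemma permV_eq n (s : {perm 'I_n}) v c : ((s^-1)%g v == c) = (s c == v).
Proof. by apply/eqP/eqP => [<-|<-]; rewrite ?permKV ?permK. Qed.

Lemma fiber1 n (c v : 'I_n) : #|[set s : {perm 'I_n} | s c == v]| = (n.-1)`!.
Proof.
pose t := tperm v c.
have -> : [set s : {perm 'I_n} | s c == v] = [set (r * t)%g | r in perm_on [set~ c]].
  apply/setP => s; rewrite inE; apply/eqP/imsetP.
    move=> sc; exists (s * t)%g; last by rewrite -mulgA tperm2 mulg1.
    apply/subsetP => x; rewrite !inE; apply: contra => /eqP ->.
    by rewrite permM sc tpermL.
  by case=> r rp ->; rewrite permM (out_perm rp) ?tpermR // !inE negbK.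
by rewrite card_imset; [rewrite card_perm cardsC1 card_ord | exact: mulIg].
Qed.

Lemma fiber2 n (a b v w : 'I_n) : a != b -> v != w ->
  #|[set s : {perm 'I_n} | (s a == v) && (s b == w)]| = (n.-2)`!.
Proof.
move=> ab vw.
pose x := tperm a v b.
have xv : v != x.
  apply/eqP => e; have := tpermK a v b; rewrite -/x -e tpermR => ba; by rewrite ba eqxx in ab.
pose t := (tperm a v * tperm x w)%g.
have ta : t a = v by rewrite permM tpermL tpermD // eq_sym.
have tb : t b = w by rewrite permM -/x tpermL.
have -> : [set s : {perm 'I_n} | (s a == v) && (s b == w)] =
          [set (r * t)%g | r in perm_on (~: [set a; b])].
  apply/setP => s; rewrite inE; apply/andP/imsetP.
    move=> [/eqP sa /eqP sb]; exists (s * t^-1)%g; last by rewrite mulgKV.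
    apply/subsetP => y; rewrite !inE; apply: contra => /orP [] /eqP ->.
      by rewrite permM sa -ta permK.
    by rewrite permM sb -tb permK.
  case=> r rp ->; rewrite (permM r t a) (permM r t b) !(out_perm rp) ?ta ?tb ?eqxx //; by rewrite !inE eqxx ?orbT.
rewrite card_imset; last exact: mulIg.
rewrite card_perm; congr (_ `!).
have := cardsC [set a; b]; rewrite cards2 ab card_ord; lia.
Qed.

Unset Implicit Arguments.

Theorem mainTheorem5 (n l : nat) (t s : term n) (k1 k2 : nat) :
  2 <= n -> n <= l ->
  t != [::] -> s != [::] ->
  Var t :|: Var s = [set: 'I_n] ->
  #|Var t :\: Var s| = k1 ->
  #|Var s :\: Var t| = k2 ->
  let N := (n - k1 - k2) * (n.-1)`! + k1 * k2 * (n.-2)`! in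
  (exists d : seq {set point n l},
     irreducible_decomposition (V1 l (t, s)) d /\ size d = N) /\
  (forall d : seq {set point n l},
     irreducible_decomposition (V1 l (t, s)) d -> size d = N).
Proof.
move=> n2 nl tn sn U Hk1 Hk2 N.
set Vt := Var t in U Hk1 Hk2 *; set Vs := Var s in U Hk1 Hk2 *.
pose A := Vt :\: Vs; pose B := Vs :\: Vt; pose C := Vt :&: Vs.
have memt : forall x, (x \in Vt) = (x \in t) by move=> x; rewrite inE.
have mems : forall x, (x \in Vs) = (x \in s) by move=> x; rewrite inE.
have dAB : forall x, x \in A -> x \in B -> False.
  by move=> x; rewrite !inE => /andP [h1 h2] /andP [h3 h4]; rewrite h2 in h3.
have dAC : forall x, x \in A -> x \in C -> False.
  by move=> x; rewrite !inE => /andP [h1 h2] /andP [h3 h4]; rewrite h4 in h1.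
have dBC : forall x, x \in B -> x \in C -> False.
  by move=> x; rewrite !inE => /andP [h1 h2] /andP [h3 h4]; rewrite h3 in h1.
pose i0 : 'I_n := Ordinal (ltnW n2).
pose i1 : 'I_n := Ordinal n2.
have e0 : (i0 : nat) = 0 by [].
have e1 : (i1 : nat) = 1 by [].
pose SC := [set s : {perm 'I_n} | good A B C false s].
pose SAB := [set s : {perm 'I_n} | good A B C true s].
pose idx := [seq (false, s) | s <- enum SC] ++ [seq (true, s) | s <- enum SAB].
pose d := [seq Comp (gpt nl p.1 p.2) | p <- idx].
have idx_good : forall p, p \in idx -> good A B C p.1 p.2.
  by move=> p; rewrite mem_cat => /orP [] /mapP [sg]; rewrite mem_enum inE => h ->.
have uidx : uniq idx.
  rewrite cat_uniq !map_inj_uniq ?enum_uniq //=; last 2 first.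
  - by move=> ? ? [].
  - by move=> ? ? [].
  rewrite andbT; apply/hasPn => p /mapP [sg _ ->]; apply/negP => /mapP [sg' _ e]; by case: e.
have Hsol : forall p, p \in idx ->
    eval_term t (gpt nl p.1 p.2) = eval_term s (gpt nl p.1 p.2).
  move=> [b sg] /idx_good /= G.
  suff [zt [zs [zt_in [zs_in [h1 h2]]]]] : exists zt zs, zt \in t /\ zs \in s /\
      hb b (sg zt) = 0 /\ hb b (sg zs) = 0.
    have := eval_le (gpt nl b sg) zt_in; have := eval_le (gpt nl b sg) zs_in.
    by rewrite !gptE h1 h2 !leqn0 => /eqP -> /eqP ->.
  case: b G => G.
  - exists (sg^-1 i0)%g, (sg^-1 i1)%g.
    have h0 : (sg (sg^-1 i0)%g : nat) = 0 by rewrite permKV.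
    have h1 : (sg (sg^-1 i1)%g : nat) = 1 by rewrite permKV.
    have := goodT0 G h0; have := goodT1 G h1; rewrite !inE -memt -mems.
    by move=> /andP [_ ->] /andP [_ ->]; rewrite h0 h1.
  - exists (sg^-1 i0)%g, (sg^-1 i0)%g.
    have h0 : (sg (sg^-1 i0)%g : nat) = 0 by rewrite permKV.
    have := goodF G h0; rewrite !inE -memt -mems.
    by move=> /andP [-> ->]; rewrite h0.
have Hd : irreducible_decomposition (V1 l (t, s)) d.
  split.
    by move=> Z /mapP [p _ ->]; exact: Comp_irr.
  split.
    move=> i j; rewrite size_map => hi hj nij.
    rewrite !(nth_map (false, 1%g)) //; apply/negP => sub.
    have := subsetP sub _ (Comp_self _); move/inComp => H.
    have [E1 E2] := K e0 e1 dAB dAC dBC (idx_good _ (mem_nth (false, 1%g) hi))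
                    (idx_good _ (mem_nth (false, 1%g) hj)) H.
    have : nth (false, 1%g) idx i == nth (false, 1%g) idx j.
      by move: E1 E2; case: (nth _ idx i) => ? ?; case: (nth _ idx j) => ? ? /= -> ->.
    by rewrite nth_uniq // (negbTE nij).
  apply/setP => Q; rewrite in_bigcup_seq has_map /V1 inE /=.
  apply/idP/hasP; last first.
    by move=> [p pidx HQ]; apply/eqP; apply: transfer tn sn (Hsol p pidx) HQ.
  move=> /eqP HQ.
  have [xm Hm] : exists xm, forall z, Q xm <= Q z.
    case: (@arg_minnP _ i0 predT (fun i => Q i : nat) isT) => x _ H.
    by exists x => z; exact: H.
  have fromC : forall c0, c0 \in C -> (forall z, Q c0 <= Q z) ->
      exists2 p, p \in idx & Q \in Comp (gpt nl p.1 p.2).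
    move=> c0 cC Hc; have [sg [G HQ']] := caseC nl A B cC Hc.
    exists (false, sg) => //; rewrite mem_cat; apply/orP; left.
    by apply/map_f; rewrite mem_enum inE.
  have fromAB : forall a0 b0, a0 \in A -> b0 \in B -> (forall z, Q a0 <= Q z) ->
      (Q b0 : nat) = Q a0 -> exists2 p, p \in idx & Q \in Comp (gpt nl p.1 p.2).
    move=> a0 b0 aA bB Ha eb.
    have nab : a0 != b0 by apply/eqP => e; subst; exact: (dAB _ aA bB).
    have [sg [G HQ']] := caseAB nl C aA bB nab Ha eb.
    exists (true, sg) => //; rewrite mem_cat; apply/orP; right.
    by apply/map_f; rewrite mem_enum inE.
  case: (boolP (xm \in C)) => xC; first exact: (fromC xm xC Hm).
  have : xm \in Vt :|: Vs by rewrite U inE.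
  rewrite inE => /orP [xt|xs].
  + have xA : xm \in A by move: xC; rewrite /C /A in_setI in_setD xt andbT.
    have Et : eval_term t Q = Q xm by apply: eval_eqQ; rewrite -?memt.
    have [y ys ey] := eval_mem Q sn.
    have Ey : (Q y : nat) = Q xm by rewrite -ey -HQ.
    have Hy : forall z, Q y <= Q z by move=> z; rewrite Ey.
    case: (boolP (y \in C)) => yC; first exact: (fromC y yC Hy).
    have yB : y \in B by move: yC; rewrite /C /B in_setI in_setD mems ys !andbT.
    exact: fromAB xA yB Hm Ey.
  + have xB : xm \in B by move: xC; rewrite /C /B in_setI in_setD xs !andbT.
    have Es : eval_term s Q = Q xm by apply: eval_eqQ; rewrite -?mems.
    have [y yt ey] := eval_mem Q tn.
    have Ey : (Q y : nat) = Q xm by rewrite -ey HQ.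
    have Hy : forall z, Q y <= Q z by move=> z; rewrite Ey.
    case: (boolP (y \in C)) => yC; first exact: (fromC y yC Hy).
    have yA : y \in A by move: yC; rewrite /C /A in_setI in_setD memt yt /= andbT.
    exact: fromAB yA xB Hy (esym Ey).
have cSC : #|SC| = #|C| * (n.-1)`!.
  rewrite -sum1_card (partition_big (fun sg : {perm 'I_n} => (sg^-1)%g i0) (fun c => c \in C)) /=;
    last by move=> sg; rewrite inE => G; apply: (goodF G); rewrite permKV.
  rewrite -sum_nat_const; apply: eq_bigr => c cC.
  rewrite -(fiber1 c i0) -sum1_card; apply: eq_bigl => sg; rewrite !inE permV_eq.
  case: (eqVneq (sg c) i0) => e; rewrite ?andbF ?andbT //; apply/forallP => x; apply/implyP => /eqP h.
  have : sg x = sg c by apply/val_inj; rewrite /= h e.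
  by move/perm_inj => ->.
have i01 : i0 != i1 by [].
have cSAB : #|SAB| = #|A| * #|B| * (n.-2)`!.
  rewrite -sum1_card (partition_big (fun sg : {perm 'I_n} => ((sg^-1)%g i0, (sg^-1)%g i1))
     (fun ab => ab \in setX A B)) /=; last first.
    move=> sg; rewrite inE => G; rewrite inE /=.
    by rewrite (goodT0 G) ?(goodT1 G) ?permKV.
  rewrite -cardsX -sum_nat_const; apply: eq_bigr => [[a b]]; rewrite inE /= => /andP [aA bB].
  have ab : a != b by apply/eqP => e; subst; exact: (dAB _ aA bB).
  rewrite -(fiber2 ab i01) -sum1_card; apply: eq_bigl => sg; rewrite !inE /= xpair_eqE !permV_eq.
  case: (eqVneq (sg a) i0) => ea; case: (eqVneq (sg b) i1) => eb; rewrite ?andbF ?andbT //.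
  apply/forallP => x; apply/andP; split; apply/implyP => /eqP h.
    have : sg x = sg a by apply/val_inj; rewrite /= h ea.
    by move/perm_inj => ->.
  have : sg x = sg b by apply/val_inj; rewrite /= h eb.
  by move/perm_inj => ->.
have Hsize : size d = N.
  rewrite size_map size_cat !size_map -!cardE cSC cSAB /N.
  have := cardsUI Vt Vs; rewrite U cardsT card_ord.
  have := cardsID Vs Vt; have := cardsID Vt Vs; rewrite setIC.
  rewrite -/A -/B -/C Hk1 Hk2.
  move=> h1 h2 h3; have -> : #|C| = n - k1 - k2 by lia.
  by [].
split; first by exists d.
by move=> d' D'; rewrite -Hsize; apply: decomp_size D' Hd.
Qed.
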